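(* Let $K$ be a field, $A$ a subring of $K$, and $Z:=\mathrm{Zar}(K|A)$. Then: (1) The ultrafilter topology on $Z$ is finer than the Zariski topology on $Z$. (2) For any subset $S$ of $K$, the set $B_S:=\{V\in Z\mid V\supseteq S\}$ is closed in the ultrafilter topology. In particular, the basic open sets $B_F$ ($F$ a finite subset of $K$) of the Zariski topology are both open and closed in the ultrafilter topology. (3) Let $Z^{\#}$ denote $Z$ endowed with the $\#$-topology, defined as the coarsest topology on $Z$ for which $B_F$ is both open and closed for every finite subset $F$ of $K$. Then $Z^{\#}$ is a Hausdorff topological space. (4) The $\#$-topology on $Z$ is the coarsest topology having as closed sets the closed sets and the quasi-compact open sets of $Z$ with the Zariski topology; i.e., the family $\{B_F \mid F \text{ a finite subset of } K\}\cup\{\bigcap\{Z\setminus B_G\mid G\in\mathcal G\}\mid \mathcal G \text{ a set of finite subsets of } K\}$ is a subbasis for the closed subsets of $Z^{\#}$. (5) $Z$ with the ultrafilter topology is a Hausdorff compact topological space. (6) The ultrafilter topology, the $\#$-topology and the constructible topology on $Z$ coincide.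
   Context: $\mathrm{Zar}(K|A)$ denotes the set of all valuation rings of $K$ containing $A$. For $S\subseteq K$, $B_S:=\{V\in Z\mid V\supseteq S\}$, and $B_x:=B_{\{x\}}$. The Zariski topology on $Z$ is the topology having as a basis of open sets the sets $B_F$, $F$ ranging over the finite subsets of $K$. A filter on a set $X$ is a nonempty collection of subsets of $X$ not containing $\emptyset$, closed under finite intersections and supersets; an ultrafilter is a maximal filter. For $Y\subseteq Z$ nonempty and $\mathscr U$ an ultrafilter on $Y$, $A_{\mathscr U,Y}:=\{x\in K\mid B_x\cap Y\in\mathscr U\}$ (a valuation domain in $Z$). A subset $Y\subseteq Z$ is stable for ultrafilters if $A_{\mathscr U,Y}\in Y$ for all ultrafilters $\mathscr U$ on $Y$; the ultrafilter topology on $Z$ is the topology whose closed sets are exactly the subsets stable for ultrafilters. For a topological space $\mathcal X$, the constructible topology on $\mathcal X$ is the topology having as a basis the Boolean algebra of subsets of $\mathcal X$ generated (under finite unions, finite intersections and complements) by the quasi-compact open subsets of $\mathcal X$; on $Z$ it is taken with respect to the Zariski topology. *)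

(* Defs.v *)
From HB Require Import structures.
From mathcomp Require Import all_boot all_algebra.
From mathcomp Require Import boolp classical_sets cardinality.
Set Implicit Arguments. Unset Strict Implicit. Unset Printing Implicit Defensive.
Import GRing.Theory.
Local Open Scope classical_set_scope.
Local Open Scope ring_scope.

Section Defs.
Variable K : fieldType.

Definition is_subring (A : set K) : Prop :=
  A 1 /\ (forall x y, A x -> A y -> A (x - y)) /\
  (forall x y, A x -> A y -> A (x * y)).

Definition is_valring (V : set K) : Prop :=
  is_subring V /\ (forall x : K, x != 0 -> V x \/ V x^-1).

Definition zar (A : set K) : Type := {V : set K | is_valring V /\ A `<=` V}.

Variable A : set K.
Local Notation Z := (zar A).

Definition Bset (S : set K) : set Z := [set V | S `<=` proj1_sig V].
End Defs.
Arguments Bset {K} A S _ : rename.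

Section Topo.
Variable T : Type.

Definition is_topology (tau : set (set T)) : Prop :=
  tau setT /\ tau set0 /\
  (forall U V, tau U -> tau V -> tau (U `&` V)) /\
  (forall F : set (set T), F `<=` tau -> tau (\bigcup_(U in F) U)).

Definition closed_in (tau : set (set T)) (C : set T) : Prop := tau (~` C).

Definition finer (tau1 tau2 : set (set T)) : Prop := tau2 `<=` tau1.

Definition basis_topology (B : set (set T)) : set (set T) :=
  [set U | forall x, U x -> exists2 W, B W & W x /\ W `<=` U].

Definition gen_topology (S : set (set T)) : set (set T) :=
  [set U | forall tau, is_topology tau -> S `<=` tau -> tau U].

Definition gen_topology_closed (C : set (set T)) : set (set T) :=
  gen_topology [set U | exists2 D, C D & U = ~` D].

Definition hausdorff (tau : set (set T)) : Prop :=
  forall x y : T, x <> y ->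
    exists U V, [/\ tau U, tau V, U x, V y & U `&` V = set0].

Definition qcompact (tau : set (set T)) (C : set T) : Prop :=
  forall cov : set (set T), cov `<=` tau -> C `<=` \bigcup_(U in cov) U ->
    exists2 fin : set (set T), finite_set fin /\ fin `<=` cov &
      C `<=` \bigcup_(U in fin) U.

Definition bool_alg (G : set (set T)) : set (set T) :=
  [set W | forall Bf : set (set T), G `<=` Bf ->
     (forall U V, Bf U -> Bf V -> Bf (U `|` V)) ->
     (forall U V, Bf U -> Bf V -> Bf (U `&` V)) ->
     (forall U, Bf U -> Bf (~` U)) -> Bf W].

Definition is_filter_on (Y : set T) (F : set (set T)) : Prop :=
  [/\ (forall S, F S -> S `<=` Y), (exists S, F S), ~ F set0,
      (forall S1 S2, F S1 -> F S2 -> F (S1 `&` S2)) &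
      (forall S1 S2, F S1 -> S1 `<=` S2 -> S2 `<=` Y -> F S2)].

Definition is_ultrafilter_on (Y : set T) (F : set (set T)) : Prop :=
  is_filter_on Y F /\
  (forall G, is_filter_on Y G -> F `<=` G -> G = F).
End Topo.

Section ZarTop.
Variables (K : fieldType) (A : set K).
Local Notation Z := (zar A).

Definition Bfin : set (set Z) := [set W | exists2 F : set K, finite_set F & W = Bset A F].

Definition zariski_open : set (set Z) := basis_topology Bfin.

Definition A_uf (Y : set Z) (U : set (set Z)) : set K :=
  [set x | U (Bset A [set x] `&` Y)].

Definition stable_uf (Y : set Z) : Prop :=
  forall U, is_ultrafilter_on Y U -> exists2 V : Z, Y V & proj1_sig V = A_uf Y U.

Definition uf_open : set (set Z) := [set U | stable_uf (~` U)].

Definition sharp_open : set (set Z) :=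
  gen_topology [set U | exists2 F : set K, finite_set F & (U = Bset A F \/ U = ~` Bset A F)].

Definition constructible_open : set (set Z) :=
  basis_topology (bool_alg [set W | zariski_open W /\ qcompact zariski_open W]).
End ZarTop.
Arguments Bfin {K} A _.
Arguments zariski_open {K} A _.
Arguments A_uf {K} A Y U _.
Arguments stable_uf {K} A Y.
Arguments uf_open {K} A _.
Arguments sharp_open {K} A _.
Arguments constructible_open {K} A _.

(* Main.v *)
Require Import Defs.
From mathcomp Require Import all_boot all_algebra.
From mathcomp Require Import boolp classical_sets cardinality.
From mathcomp Require filter.
Local Open Scope classical_set_scope.

Module Helpers.
Set Implicit Arguments. Unset Strict Implicit.

Section Gen.
Variable T : Type.

Lemma fin_ind (I : Type) (P : set I -> Prop) : P set0 ->
  (forall B x, P B -> P (x |` B)) -> forall B, finite_set B -> P B.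
Proof.
move=> P0 PS B /finite_setP [n]; elim: n B => [|n IH] B.
  by rewrite II0 card_eq0 => /eqP ->.
by move=> /eq_cardSP [x Bx /IH /(PS _ x)]; rewrite setD1K.
Qed.

Lemma bigcap_fin (P : set (set T)) (Y : set T) (I : Type) (D : set I) (f : I -> set T) :
  P Y -> (forall U V, P U -> P V -> P (U `&` V)) -> finite_set D ->
  (forall i, D i -> P (f i)) -> P (Y `&` \bigcap_(i in D) f i).
Proof.
move=> PY PI Dfin; move: D Dfin; apply: fin_ind.
  by move=> _; rewrite bigcap_set0 setIT.
move=> B x IH H; rewrite bigcap_setU1 setICA; apply: PI.
  by apply: H; left.
by apply: IH => i Bi; apply: H; right.
Qed.

Lemma open_via (tau : set (set T)) (U : set T) : is_topology tau ->
  (forall x, U x -> exists2 W, tau W & W x /\ W `<=` U) -> tau U.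
Proof.
move=> [_ [_ [_ Hu]]] H.
have -> : U = \bigcup_(W in [set W | tau W /\ W `<=` U]) W.
  apply/seteqP; split=> x.
    by move=> /H [W tW [Wx WU]]; exists W.
  by move=> [W [_ WU] Wx]; apply: WU.
by apply: Hu => W [].
Qed.

Lemma top_U (tau : set (set T)) U V : is_topology tau -> tau U -> tau V -> tau (U `|` V).
Proof.
move=> tt tU tV; apply: open_via => // x [Ux|Vx].
  by exists U => //; split => // y; left.
by exists V => //; split => // y; right.
Qed.

Lemma top_I (tau : set (set T)) U V : is_topology tau -> tau U -> tau V -> tau (U `&` V).
Proof. by move=> [_ [_ [H _]]]; apply: H. Qed.

Lemma top_bigcap (tau : set (set T)) (I : Type) (D : set I) (f : I -> set T) :
  is_topology tau -> finite_set D -> (forall i, D i -> tau (f i)) ->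
  tau (\bigcap_(i in D) f i).
Proof.
move=> tt Df H; rewrite -[X in tau X]setTI; apply: bigcap_fin => //.
  by case: tt.
by move=> U V; apply: top_I.
Qed.

Lemma gen_is_top (S : set (set T)) : is_topology (gen_topology S).
Proof.
split; first by move=> tau [].
split; first by move=> tau [_ []].
split; first by move=> U V HU HV tau tt St; apply: top_I => //; [apply: HU|apply: HV].
move=> F HF tau tt St; case: (tt) => _ [_ [_ Hu]]; apply: Hu => U /HF; exact.
Qed.

Lemma gen_sub (S : set (set T)) : S `<=` gen_topology S.
Proof. by move=> U SU tau _; apply. Qed.

Lemma gen_min (S tau : set (set T)) : is_topology tau -> S `<=` tau ->
  gen_topology S `<=` tau.
Proof. by move=> tt St U; apply. Qed.

Lemma gen_eq (S1 S2 : set (set T)) : S1 `<=` gen_topology S2 ->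
  S2 `<=` gen_topology S1 -> gen_topology S1 = gen_topology S2.
Proof.
move=> H1 H2; apply/seteqP; split; apply: gen_min => //; exact: gen_is_top.
Qed.

Lemma basis_top (B : set (set T)) : B setT ->
  (forall U V, B U -> B V -> B (U `&` V)) -> is_topology (basis_topology B).
Proof.
move=> BT BI; split; first by move=> x _; exists setT.
split; first by move=> x.
split.
  move=> U V HU HV x [Ux Vx].
  have [W1 B1 [W1x W1U]] := HU x Ux; have [W2 B2 [W2x W2V]] := HV x Vx.
  exists (W1 `&` W2); first exact: BI.
  by split => // y [/W1U ? /W2V ?].
move=> F HF x [U FU Ux]; have [W BW [Wx WU]] := HF U FU x Ux.
by exists W => //; split => // y /WU Uy; exists U.
Qed.

Lemma basis_sub (B : set (set T)) : B `<=` basis_topology B.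
Proof. by move=> W BW x Wx; exists W => //; split. Qed.

Lemma basis_min (B tau : set (set T)) : is_topology tau -> B `<=` tau ->
  basis_topology B `<=` tau.
Proof.
move=> tt Bt U HU; apply: open_via => // x Ux; have [W BW [Wx WU]] := HU x Ux.
by exists W => //; apply: Bt.
Qed.

Lemma compact_closed_sub (tau : set (set T)) (C : set T) :
  qcompact tau setT -> closed_in tau C -> qcompact tau C.
Proof.
move=> cpt cC cov ct Ccov.
have [|x _|fin [finf fins] fcov] := cpt (~` C |` cov).
- by move=> W [->|/ct].
- case: (pselect (C x)) => Cx.
    by have [W ? ?] := Ccov x Cx; exists W => //; right.
  by exists (~` C) => //; left.
exists (fin `&` cov).
  by split; [apply: sub_finite_set finf => W []|move=> W []].
move=> x Cx; have [W fW Wx] := fcov x I.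
case: (fins W fW) => [WC|covW]; last by exists W.
by exfalso; move: Wx; rewrite WC.
Qed.

Lemma compact_haus_closed (tau : set (set T)) (C : set T) :
  is_topology tau -> hausdorff tau -> qcompact tau C -> closed_in tau C.
Proof.
move=> tt ht cpt; rewrite /closed_in; apply: (open_via (tau:=tau)) => // y nCy.
pose cov := [set U | tau U /\ exists V, [/\ tau V, V y & U `&` V = set0]].
have [|x Cx|fin [finf fins] fcov] := cpt cov.
- by move=> U [].
- have xy : x <> y by move=> e; apply: nCy; rewrite -e.
  have [U [V [tU tV Ux Vy UV]]] := ht x y xy.
  by exists U => //; split => //; exists V.
have HV : forall U, exists V, fin U -> [/\ tau V, V y & U `&` V = set0].
  move=> U; case: (pselect (fin U)) => fU; last by exists setT.
  by have [_ [V HV]] := fins U fU; exists V.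
have [g Hg] := choice HV.
exists (\bigcap_(U in fin) g U).
  by apply: top_bigcap => // U fU; case: (Hg U fU).
split.
- by move=> U fU; case: (Hg U fU).
- move=> z gz Cz; have [U fU Uz] := fcov z Cz.
  have [_ _ UV] := Hg U fU.
  have : (U `&` g U) z by split => //; apply: gz.
  by rewrite UV.
Qed.

Lemma compact_haus_sub (t1 t2 : set (set T)) : is_topology t1 -> is_topology t2 ->
  t2 `<=` t1 -> qcompact t1 setT -> hausdorff t2 -> t1 `<=` t2.
Proof.
move=> tt1 tt2 s21 c1 h2 W tW.
have cW : closed_in t1 (~` W) by rewrite /closed_in setCK.
have c1W := compact_closed_sub c1 cW.
have c2W : qcompact t2 (~` W).
  by move=> cov ct; apply: c1W => U /ct /s21.
have := compact_haus_closed tt2 h2 c2W.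
by rewrite /closed_in setCK.
Qed.

Section Filt.
Variables (Y : set T) (U : set (set T)).
Hypothesis fU : is_filter_on Y U.

Lemma f_sub P : U P -> P `<=` Y. Proof. by case: fU => H _ _ _ _; apply: H. Qed.
Lemma f_I P Q : U P -> U Q -> U (P `&` Q). Proof. by case: fU => _ _ _ H _; apply: H. Qed.
Lemma f_up P Q : U P -> P `<=` Q -> Q `<=` Y -> U Q.
Proof. by case: fU => _ _ _ _ H; apply: H. Qed.
Lemma f_0 : ~ U set0. Proof. by case: fU. Qed.
Lemma f_Y : U Y.
Proof. by case: fU => H [S US] _ _ _; apply: (f_up US) => //; apply: H. Qed.
End Filt.

Lemma uf_char (Y : set T) (U : set (set T)) :
  is_ultrafilter_on Y U <->
  is_filter_on Y U /\ forall S, S `<=` Y -> U S \/ U (Y `\` S).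
Proof.
split.
  move=> [fU mU]; split => // S SY.
  case: (pselect (exists P, U P /\ P `&` S = set0)) => [[P [UP PS]]|nP].
    right; apply: (f_up fU UP); last by move=> z [].
    move=> z Pz; split; first exact: (f_sub fU UP).
    by move=> Sz; have : (P `&` S) z by []; rewrite PS.
  left; pose G := [set Q | Q `<=` Y /\ exists2 P, U P & P `&` S `<=` Q].
  have fG : is_filter_on Y G.
    split.
    - by move=> Q [].
    - by exists Y; split => //; exists Y; [exact: (f_Y fU)| move=> z []].
    - move=> [_ [P UP PS]]; apply: nP; exists P; split => //.
      by apply/seteqP; split => // z /PS.
    - move=> Q1 Q2 [Q1Y [P1 UP1 PQ1]] [_ [P2 UP2 PQ2]]; split.
        by move=> z [/Q1Y].
      exists (P1 `&` P2); first exact: (f_I fU UP1 UP2).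
      by move=> z [[P1z P2z] Sz]; split; [apply: PQ1|apply: PQ2].
    - move=> Q1 Q2 [_ [P UP PQ]] Q12 Q2Y; split => //.
      by exists P => // z /PQ /Q12.
  have UG : U `<=` G.
    move=> P UP; split; first exact: (f_sub fU UP).
    by exists P => // z [].
  have <- := mU G fG UG; split => //; exists Y; first exact: (f_Y fU).
  by move=> z [].
move=> [fU cU]; split => // G fG UG; apply/seteqP; split => // S GS.
have SY := f_sub fG GS.
case: (cU S SY) => // /UG GC.
have := f_I fG GS GC.
suff -> : S `&` (Y `\` S) = set0 by move/(f_0 fG).
by apply/seteqP; split => // z [? []].
Qed.

Lemma uf_transport (Y Y' : set T) (U : set (set T)) :
  is_ultrafilter_on Y' U -> U (Y `&` Y') ->
  is_ultrafilter_on Y [set S | S `<=` Y /\ U (S `&` Y')].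
Proof.
move=> /uf_char [fU cU] UYY; apply/uf_char; split.
  split.
  - by move=> S [].
  - by exists Y; split.
  - by move=> [_]; rewrite set0I; apply: (f_0 fU).
  - move=> S1 S2 [S1Y U1] [_ U2]; split; first by move=> z [/S1Y].
    apply: (f_up fU (f_I fU U1 U2)); last by move=> z [].
    by move=> z [[? ?] [? ?]].
  - move=> S1 S2 [_ U1] S12 S2Y; split => //.
    by apply: (f_up fU U1); [move=> z [/S12]|move=> z []].
move=> S SY.
have : S `&` Y' `<=` Y' by move=> z [].
move=> /cU [H|H]; [left|right] => //; split; first by move=> z [].
apply: (f_up fU (f_I fU H UYY)); last by move=> z [].
by move=> z [[Y'z nS] [Yz _]]; split => //; split => // Sz; apply: nS.
Qed.

End Gen.

Module ZarM.
Import filter.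

Section Zar.
Variables (K : fieldType) (A : set K).
Local Notation Z := (zar A).

Lemma Z_eq (V W : Z) : proj1_sig V = proj1_sig W -> V = W.
Proof. by case: V W => [V pV] [W pW] /= e; apply: eq_exist. Qed.

Lemma B1P (V : Z) x : Bset A [set x] V <-> proj1_sig V x.
Proof. by split => [H|H y ->]; [apply: H|]. Qed.

Lemma valring_uf (Y : set Z) (U : set (set Z)) : is_ultrafilter_on Y U ->
  is_valring (A_uf A Y U) /\ A `<=` A_uf A Y U.
Proof.
move=> /uf_char [fU cU].
have upB x : (forall V : Z, Y V -> proj1_sig V x) -> A_uf A Y U x.
  move=> H; apply: (f_up fU (f_Y fU)); last by move=> z [].
  by move=> V YV; split => //; apply/B1P; apply: H.
have two op x y : (forall V : Z, proj1_sig V x -> proj1_sig V y -> proj1_sig V (op x y)) ->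
    A_uf A Y U x -> A_uf A Y U y -> A_uf A Y U (op x y).
  move=> H Ux Uy; apply: (f_up fU (f_I fU Ux Uy)); last by move=> z [].
  by move=> V [[/B1P Vx YV] [/B1P Vy _]]; split => //; apply/B1P; apply: H.
split; last first.
  by move=> a Aa; apply: upB => V _; case: (proj2_sig V) => _; apply.
split; first split.
- by apply: upB => V _; case: (proj2_sig V) => [[[]]].
- split.
  + move=> x y; apply: (two (fun a b => a - b)%R) => V.
    by case: (proj2_sig V) => [[[_ [H _]] _] _]; apply: H.
  + move=> x y; apply: (two (fun a b => a * b)%R) => V.
    by case: (proj2_sig V) => [[[_ [_ H]] _] _]; apply: H.
- move=> x x0.
  have : Bset A [set x] `&` Y `<=` Y by move=> z [].
  move=> /cU [H|H]; [by left|right].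
  apply: (f_up fU H); last by move=> z [].
  move=> V [YV nBV]; split => //; apply/B1P.
  case: (proj2_sig V) => [[_ H2] _]; case: (H2 x x0) => // Vx.
  by exfalso; apply: nBV; split => //; apply/B1P.
Qed.

Definition V0 (Y : set Z) (U : set (set Z)) (hU : is_ultrafilter_on Y U) : Z :=
  exist _ (A_uf A Y U) (valring_uf hU).

Lemma A_uf_transport (Y Y' : set Z) (U : set (set Z)) :
  is_filter_on Y' U -> U (Y `&` Y') ->
  A_uf A Y [set S | S `<=` Y /\ U (S `&` Y')] = A_uf A Y' U.
Proof.
move=> fU UYY; apply/seteqP; split => x /=.
  move=> [_ H]; apply: (f_up fU H); last by move=> z [].
  by move=> z [[? _] ?].
move=> H; split; first by move=> z [].
apply: (f_up fU (f_I fU H UYY)); last by move=> z [].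
by move=> z [[? ?] [? ?]].
Qed.

Lemma stable_pt (Y Y' : set Z) (U : set (set Z)) (hU : is_ultrafilter_on Y' U) :
  stable_uf A Y -> U (Y `&` Y') -> Y (V0 hU).
Proof.
move=> sY UYY.
have hU' := uf_transport hU UYY.
have [V YV eV] := sY _ hU'.
suff <- : V = V0 hU by [].
apply: Z_eq; rewrite eV /=; apply: A_uf_transport => //; by case: (hU).
Qed.

Lemma stable_BS (S : set K) : stable_uf A (Bset A S).
Proof.
move=> U hU; exists (V0 hU) => //= s Ss.
have fU : is_filter_on (Bset A S) U by case: (hU).
apply: (f_up fU (f_Y fU)); last by move=> z [].
by move=> V BV; split => //; apply/B1P; apply: BV.
Qed.

Lemma stable_cBF (F : set K) : finite_set F -> stable_uf A (~` Bset A F).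
Proof.
move=> Ff U hU; exists (V0 hU) => //= BF.
have fU : is_filter_on (~` Bset A F) U by case: (hU).
have := @bigcap_fin _ U (~` Bset A F) _ F (fun f => Bset A [set f] `&` ~` Bset A F)
  (f_Y fU) (fun P Q => @f_I _ _ _ fU P Q) Ff (fun f Ff => BF f Ff).
suff -> : ~` Bset A F `&` \bigcap_(f in F) (Bset A [set f] `&` ~` Bset A F) = set0.
  exact: (f_0 fU).
apply/seteqP; split => // V [nBV H]; apply: nBV => f Ffx.
by have [/B1P] := H f Ffx.
Qed.


Lemma uf_top : is_topology (uf_open A).
Proof.
split.
  rewrite /uf_open /= setCT => U hU; exfalso.
  have fU : is_filter_on set0 U by case: (hU).
  exact: (f_0 fU) (f_Y fU).
split.
  by rewrite /uf_open /= setC0 => U hU; exists (V0 hU).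
split.
  move=> U V sU sV; rewrite /uf_open /= setCI => W hW.
  have [fW cW] := (uf_char _ _).1 hW.
  exists (V0 hW) => //.
  have : ~` U `<=` ~` U `|` ~` V by move=> z; left.
  move=> /cW [H|H].
    left; apply: (@stable_pt (~` U) _ _ hW sU); rewrite setIidl //; by move=> z; left.
  right; apply: (@stable_pt (~` V) _ _ hW sV); apply: (f_up fW H); last by move=> z [].
  by move=> z [[?|?] nU] //; split => //; right.
move=> F HF; rewrite /uf_open /= setC_bigcup => W hW; exists (V0 hW) => // Ux Fx.
apply: (@stable_pt (~` Ux) _ _ hW (HF Ux Fx)).
have fW : is_filter_on (\bigcap_(i in F) ~` i) W by case: (hW).
apply: (f_up fW (f_Y fW)); last by move=> z [].
by move=> z Hz; split => //; apply: Hz.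
Qed.

Lemma uf_BF (F : set K) : finite_set F ->
  uf_open A (Bset A F) /\ uf_open A (~` Bset A F).
Proof.
move=> Ff; split; first exact: stable_cBF.
by rewrite /uf_open /= setCK; exact: stable_BS.
Qed.

Lemma haus_of (tau : set (set Z)) :
  (forall x, tau (Bset A [set x]) /\ tau (~` Bset A [set x])) -> hausdorff tau.
Proof.
move=> H V W VW.
have [[x [Vx nWx]]|[x [Wx nVx]]] : (exists x, proj1_sig V x /\ ~ proj1_sig W x) \/
    (exists x, proj1_sig W x /\ ~ proj1_sig V x).
  case: (pselect (exists x, proj1_sig V x /\ ~ proj1_sig W x)) => [h|h1]; [by left|right].
  apply: contrapT => h2; apply: VW; apply: Z_eq; apply/seteqP; split => x Vx;
    apply: contrapT => nx; [apply: h1|apply: h2]; by exists x.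
  exists (Bset A [set x]), (~` Bset A [set x]); split.
  - exact: (H x).1.
  - exact: (H x).2.
  - exact/B1P.
  - by move/B1P.
  - exact: setICr.
exists (~` Bset A [set x]), (Bset A [set x]); split.
- exact: (H x).2.
- exact: (H x).1.
- by move/B1P.
- exact/B1P.
- exact: setICl.
Qed.

Lemma uf_compact : qcompact (uf_open A) setT.
Proof.
move=> cov cuf ccov; apply: contrapT => nfin.
pose F0 := [set S : set Z | exists2 fin : set (set Z),
  finite_set fin /\ fin `<=` cov & ~` (\bigcup_(W in fin) W) `<=` S].
have PF : ProperFilter F0.
  apply: Build_ProperFilter_ex.
    move=> P [fin hfin sub]; apply: contrapT => nP; apply: nfin.
    exists fin => // x _; apply: contrapT => nx; apply: nP; exists x; exact: sub.
  split.
  - by exists set0; [split; [exact: finite_set0|by []]|by []].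
  - move=> P Q [f1 [h1 s1] c1] [f2 [h2 s2] c2]; exists (f1 `|` f2).
      by split; [rewrite finite_setU|move=> W [/s1|/s2]].
    by rewrite bigcup_setU setCU => z [/c1 ? /c2 ?].
  - by move=> P Q PQ [fin h c]; exists fin => // z /c /PQ.
have [G [UG FG]] := ultraFilterLemma PF.
have PG : ProperFilter G := @ultra_proper _ _ UG.
have FGf : Filter G := @filter_filter _ _ PG.
have hG : is_ultrafilter_on setT G.
  apply/uf_char; split.
    split.
    - by [].
    - by exists setT; exact: filterT.
    - exact: filter_not_empty.
    - by move=> ? ?; apply: filterI.
    - by move=> S1 S2 h s _; apply: filterS s h.
  by move=> S _; rewrite setTD; exact: in_ultra_setVsetC.
have [W cW Wx] := ccov (V0 hG) I.
have : (~` W) (V0 hG).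
  apply: (@stable_pt (~` W) _ _ hG (cuf W cW)); rewrite setIT; apply: FG.
  exists [set W]; last by rewrite bigcup_set1.
  by split; [exact: finite_set1|by move=> _ ->].
by move=> /(_ Wx).
Qed.

End Zar.

End ZarM.
Export ZarM.
End Helpers.
Import Helpers.


Theorem theorem3p4 (K : fieldType) (A : set K) (hA : is_subring A) :
  (* (1) *)
  finer (uf_open A) (zariski_open A) /\
  (* (2) *)
  (forall S : set K, closed_in (uf_open A) (Bset A S)) /\
  (forall F : set K, finite_set F ->
     uf_open A (Bset A F) /\ closed_in (uf_open A) (Bset A F)) /\
  (* (3) *)
  hausdorff (sharp_open A) /\
  (* (4) *)
  sharp_open A =
    gen_topology_closed
      [set C | closed_in (zariski_open A) C \/
               (zariski_open A C /\ qcompact (zariski_open A) C)] /\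
  sharp_open A =
    gen_topology_closed
      [set C | (exists2 F : set K, finite_set F & C = Bset A F) \/
               (exists GG : set (set K), (forall G, GG G -> finite_set G) /\
                  C = \bigcap_(G in GG) ~` Bset A G)] /\
  (* (5) *)
  is_topology (uf_open A) /\ hausdorff (uf_open A) /\ qcompact (uf_open A) setT /\
  (* (6) *)
  uf_open A = sharp_open A /\ sharp_open A = constructible_open A.
Proof.
have ufT := uf_top A.
have ufB := @uf_BF K A.
have sharpT : is_topology (sharp_open A) := gen_is_top _.
have sharpB : forall F, finite_set F ->
    sharp_open A (Bset A F) /\ sharp_open A (~` Bset A F).
  by move=> F Ff; split; apply: gen_sub; exists F => //; [left|right].
have sh_uf : sharp_open A `<=` uf_open A.
  by apply: gen_min => // U [F Ff [->|->]]; [exact: (ufB F Ff).1|exact: (ufB F Ff).2].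
have ufH : hausdorff (uf_open A) := haus_of (fun x => ufB _ (finite_set1 x)).
have shH : hausdorff (sharp_open A) := haus_of (fun x => sharpB _ (finite_set1 x)).
have ufC : qcompact (uf_open A) setT := @uf_compact K A.
have uf_sh : uf_open A `<=` sharp_open A := compact_haus_sub ufT sharpT sh_uf ufC shH.
have ufeq : uf_open A = sharp_open A by apply/seteqP; split.
have zar_uf : finer (uf_open A) (zariski_open A).
  move=> W zW; apply: (open_via ufT) => x Wx.
  have [B [F Ff eB] [Bx BW]] := zW x Wx; subst B.
  by exists (Bset A F) => //; exact: (ufB F Ff).1.
have BF_z : forall F, finite_set F -> zariski_open A (Bset A F).
  by move=> F Ff; apply: basis_sub; exists F.
have BF_qc : forall F, finite_set F -> qcompact (zariski_open A) (Bset A F).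
  move=> F Ff cov cz; apply: (compact_closed_sub ufC (ufB F Ff).2) => // W /cz.
  exact: zar_uf.
have qc_clopen : forall W, zariski_open A W -> qcompact (zariski_open A) W ->
    sharp_open A W /\ sharp_open A (~` W).
  move=> W zW qW; split; first by rewrite -ufeq; apply: zar_uf.
  pose cov := [set B | Bfin A B /\ B `<=` W].
  have [|x Wx|fin [finf fins] fcov] := qW cov.
  - by move=> B [[F Ff ->] _]; exact: BF_z.
  - by have [B hB [Bx BW]] := zW x Wx; exists B.
  have -> : ~` W = \bigcap_(B in fin) ~` B.
    rewrite -setC_bigcup; congr (~` _); apply/seteqP; split => [x /fcov //|x [B fB Bx]].
    by have [_ BW] := fins B fB; exact: BW.
  by apply: top_bigcap => // B fB; have [[F Ff ->] _] := fins B fB; exact: (sharpB F Ff).2.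
have hT : setT = Bset A set0 by apply/seteqP; split => // V _ x.
split; first exact: zar_uf.
split; first by move=> S; rewrite /closed_in /uf_open /= setCK; exact: stable_BS.
split; first by move=> F Ff; split; [exact: (ufB F Ff).1 | exact: (ufB F Ff).2].
split; first exact: shH.
split.
  rewrite /gen_topology_closed /sharp_open; apply: gen_eq.
    move=> U [F Ff [->|->]]; apply: gen_sub.
      exists (~` Bset A F); last by rewrite setCK.
      by left; rewrite /closed_in setCK; exact: BF_z.
    by exists (Bset A F) => //; right; split; [exact: BF_z|exact: BF_qc].
  move=> U [D [cD|[zD qD]] ->].
    by rewrite -/(sharp_open A) -ufeq; exact: zar_uf.
  exact: (qc_clopen D zD qD).2.
split.
  rewrite /gen_topology_closed /sharp_open; apply: gen_eq.
    move=> U [F Ff [->|->]]; apply: gen_sub.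
      exists (\bigcap_(G in [set F]) ~` Bset A G); last by rewrite bigcap_set1 setCK.
      by right; exists [set F]; split => // G ->.
    by exists (Bset A F) => //; left; exists F.
  move=> U [D [[F Ff ->]|[GG [GGf ->]]] ->]; first exact: (sharpB F Ff).2.
  rewrite -/(sharp_open A) setC_bigcap.
  apply: (open_via sharpT) => x [G GGG nGx].
  exists (Bset A G); first exact: (sharpB G (GGf G GGG)).1.
  split; first by move: nGx; rewrite setCK.
  by move=> y By; exists G => //; rewrite setCK.
split; first exact: ufT.
split; first exact: ufH.
split; first exact: ufC.
split; first exact: ufeq.
have baS : bool_alg [set W | zariski_open A W /\ qcompact (zariski_open A) W] setT.
  move=> Bf GB _ _ _; apply: GB; rewrite hT /=; split; [exact: BF_z|exact: BF_qc].
have baI : forall U V, bool_alg [set W | zariski_open A W /\ qcompact (zariski_open A) W] U ->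
    bool_alg [set W | zariski_open A W /\ qcompact (zariski_open A) W] V ->
    bool_alg [set W | zariski_open A W /\ qcompact (zariski_open A) W] (U `&` V).
  move=> U V hU hV Bf GB hUn hI hC; apply: (hI).
    exact: (hU Bf GB hUn hI hC).
  exact: (hV Bf GB hUn hI hC).
have baT : is_topology (constructible_open A) := basis_top baS baI.
apply/seteqP; split.
  apply: gen_min => // U [F Ff [->|->]]; apply: basis_sub.
    by move=> Bf GB _ _ _; apply: GB; split; [exact: BF_z|exact: BF_qc].
  by move=> Bf GB _ _ hC; apply: hC; apply: GB; split; [exact: BF_z|exact: BF_qc].
apply: basis_min => // W hW.
have [] // := hW [set W | sharp_open A W /\ sharp_open A (~` W)].
- by move=> W' [zW qW]; exact: qc_clopen.
- move=> U V [sU sU'] [sV sV']; split; first exact: (top_U sharpT sU sV).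
  by rewrite setCU; exact: (top_I sharpT sU' sV').
- move=> U V [sU sU'] [sV sV']; split; first exact: (top_I sharpT sU sV).
  by rewrite setCI; exact: (top_U sharpT sU' sV').
- by move=> U [sU sU']; split => //; rewrite setCK.
Qed.
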